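(* Let $z\in(-1,1)$ be real and suppose that $f^{(1)}(L_z)$ and $g^{(1)}(L_z)$ are disjoint. Then there is an open neighbourhood $U$ of $z$ in $\mathbb{C}$ such that $\mathcal{M}\cap U\subseteq\mathbb{R}$.
   Context: For real $z\in(-1,1)$ define affine maps of $\mathbb{R}^2$ by $f^{(1)}(x,y)=(zx,\,x+zy)$ and $g^{(1)}(x,y)=(z(x-1)+1,\,x-1+zy)$, and let $L_z\subseteq\mathbb{R}^2$ be the limit set of the iterated function system $\{f^{(1)},g^{(1)}\}$ (the unique nonempty compact set with $L_z=f^{(1)}(L_z)\cup g^{(1)}(L_z)$). For $w\in\mathbb{D}^*=\{0<|w|<1\}$, let $\Lambda_w$ be the unique nonempty compact subset of $\mathbb{C}$ with $\Lambda_w=\{wx:x\in\Lambda_w\}\cup\{w(x-1)+1:x\in\Lambda_w\}$, and $\mathcal{M}=\{w\in\mathbb{D}^*:\Lambda_w\text{ connected}\}$. *)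

(* Defs.v *)
From HB Require Import structures.
From mathcomp Require Import all_boot all_order all_algebra.
From mathcomp Require Import all_classical all_reals all_analysis.
From mathcomp Require Import complex.
Import Order.TTheory GRing.Theory Num.Theory.
Import numFieldNormedType.Exports.
Set Implicit Arguments. Unset Strict Implicit. Unset Printing Implicit Defensive.
Local Open Scope ring_scope.
Local Open Scope classical_set_scope.

(* The complex numbers R[i] carry the metric topology of the modulus |.|. *)
HB.instance Definition _ (R : rcfType) := PseudoPointedMetric.copy R[i] R[i]^o.

Definition f1 (R : realType) (z : R) (p : R * R) : R * R :=
  (z * p.1, p.1 + z * p.2).
Definition g1 (R : realType) (z : R) (p : R * R) : R * R :=
  (z * (p.1 - 1) + 1, p.1 - 1 + z * p.2).

(* L is the limit set of the IFS {f, g}: nonempty compact with L = f(L) u g(L).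
   (Such a set is unique for contracting IFS.) *)
Definition is_limit_set (T : topologicalType) (f g : T -> T) (L : set T) : Prop :=
  L !=set0 /\ compact L /\ L = f @` L `|` g @` L.

Definition phi0 (R : realType) (w : R[i]) (x : R[i]) : R[i] := w * x.
Definition phi1 (R : realType) (w : R[i]) (x : R[i]) : R[i] := w * (x - 1) + 1.

Definition is_Lambda (R : realType) (w : R[i]) (Lam : set R[i]) : Prop :=
  is_limit_set (phi0 w) (phi1 w) Lam.

Definition Mset (R : realType) : set R[i] :=
  [set w | 0 < `|w| < 1 /\ exists Lam, is_Lambda w Lam /\ connected Lam].

(* Main.v *)
Require Import Defs.
From HB Require Import structures.
From mathcomp Require Import all_boot all_order all_algebra.
From mathcomp Require Import all_classical all_reals all_analysis.
From mathcomp Require Import complex.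
Import Order.TTheory GRing.Theory Num.Theory.
Import numFieldNormedType.Exports.
Local Open Scope ring_scope.
Local Open Scope classical_set_scope.

From mathcomp Require Import ring lra.
Local Open Scope complex_scope.
Set Implicit Arguments.
Section Gen.
Variable T : numDomainType.
Implicit Types u v r M K : T.

Definition bit (a : bool) : T := if a then 1 else 0.
Fixpoint Psi u (s : seq bool) : T :=
  if s is a :: s' then u * Psi u s' + bit a * (1 - u) else 0.
Fixpoint Dd u v (s : seq bool) : T :=
  if s is a :: s' then u * Dd u v s' + Psi v s' - bit a else 0.

Lemma norm_bit a : `|bit a| <= 1.
Proof. by case: a; rewrite /bit ?normr1 ?normr0. Qed.

Lemma DdE u v s : (u - v) * Dd u v s = Psi u s - Psi v s.
Proof.
elim: s => [|a s IH] /=; first by rewrite mulr0 subrr.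
transitivity (u * ((u - v) * Dd u v s) + (u - v) * Psi v s - (u - v) * bit a);
  first by ring.
by rewrite IH; ring.
Qed.

Lemma Psi_bound r M u s : 0 <= M -> `|u| <= r -> r * M + `|1 - u| <= M ->
  `|Psi u s| <= M.
Proof.
move=> M0 ur H; elim: s => [|a s IH] /=; first by rewrite normr0.
apply: le_trans (ler_normD _ _) _; rewrite !normrM.
apply: le_trans H; apply: lerD; first by apply: ler_pM.
by rewrite -[X in _ <= X]mul1r; apply: ler_wpM2r => //; apply: norm_bit.
Qed.

Lemma Dd_bound r M K u v s : 0 <= K -> `|u| <= r ->
  (forall s, `|Psi v s| <= M) -> r * K + M + 1 <= K -> `|Dd u v s| <= K.
Proof.
move=> K0 ur HM H; elim: s => [|a s IH] /=; first by rewrite normr0.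
apply: le_trans (ler_normB _ _) _; apply: le_trans H.
apply: lerD; last exact: norm_bit.
apply: le_trans (ler_normD _ _) _; apply: lerD => //.
by rewrite normrM; apply: ler_pM.
Qed.

Lemma Dd_lip r K K2 u v u' v' s : 0 <= K2 -> `|u| <= r ->
  (forall s, `|Dd u' v' s| <= K) ->
  (forall s, `|Psi v s - Psi v' s| <= K * `|v - v'|) ->
  r * K2 + K + K <= K2 ->
  `|Dd u v s - Dd u' v' s| <= K2 * (`|u - u'| + `|v - v'|).
Proof.
move=> K20 ur HD HP H; set E := `|u - u'| + `|v - v'|.
have E0 : 0 <= E by rewrite addr_ge0.
have K0 : 0 <= K by apply: le_trans (HD [::]); rewrite normr_ge0.
elim: s => [|a s IH] /=; first by rewrite subrr normr0 mulr_ge0.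
have -> : u * Dd u v s + Psi v s - bit a - (u' * Dd u' v' s + Psi v' s - bit a)
  = u * (Dd u v s - Dd u' v' s) + (u - u') * Dd u' v' s + (Psi v s - Psi v' s) by ring.
apply: le_trans (ler_normD _ _) _.
apply: (@le_trans _ _ (r * K2 * E + K * E + K * E)); last first.
  by rewrite -!mulrDl; apply: ler_wpM2r.
apply: lerD; last first.
  apply: le_trans (HP s) _; apply: ler_wpM2l => //.
  by rewrite /E lerDr normr_ge0.
apply: le_trans (ler_normD _ _) _; apply: lerD.
  by rewrite normrM -mulrA; apply: ler_pM.
rewrite normrM mulrC; apply: ler_pM => //.
by rewrite /E lerDl normr_ge0.
Qed.

End Gen.
Arguments bit {T}.
Arguments Psi {T}.
Arguments Dd {T}.

Lemma Psi_morph (T T' : numDomainType) (f : {rmorphism T -> T'}) u s :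
  f (Psi u s) = Psi (f u) s.
Proof.
elim: s => [|a s IH] /=; first by rewrite rmorph0.
by rewrite rmorphD !rmorphM rmorphB rmorph1 IH; case: a; rewrite /bit ?rmorph1 ?rmorph0.
Qed.

Lemma Dd_morph (T T' : numDomainType) (f : {rmorphism T -> T'}) u v s :
  f (Dd u v s) = Dd (f u) (f v) s.
Proof.
elim: s => [|a s IH] /=; first by rewrite rmorph0.
by rewrite rmorphB rmorphD rmorphM IH Psi_morph; case: a; rewrite /bit ?rmorph1 ?rmorph0.
Qed.

Section Est.
Variable T : numDomainType.
Lemma estG (zc w Dz Dw e r M K C : T) :
  `|zc - w| <= e -> `|w| <= r -> `|Dz| <= M + M -> `|Dz - Dw| <= (K + K) * e ->
  0 <= e -> (M + M) + r * (K + K) + 1 <= C ->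
  `|(zc * Dz + zc - 1) - (w * Dw + w - 1)| <= C * e.
Proof.
move=> h1 h2 h3 h4 e0 hC.
have r0 : 0 <= r by apply: le_trans h2.
have -> : zc * Dz + zc - 1 - (w * Dw + w - 1) = (zc - w) * Dz + w * (Dz - Dw) + (zc - w) by ring.
apply: le_trans (ler_normD _ _) _; apply: le_trans (lerD (ler_normD _ _) (lexx _)) _.
rewrite !normrM.
apply: (@le_trans _ _ (e * (M + M) + r * ((K + K) * e) + e)).
  apply: lerD => //; apply: lerD; apply: ler_pM => //.
apply: le_trans _ (ler_wpM2r e0 hC).
by rewrite le_eqVlt; apply/orP; left; apply/eqP; ring.
Qed.

Lemma estH (zc w Dz Dwc Ez Ew e r K K2 C : T) :
  `|zc - w| <= e -> `|w| <= r -> `|Dz - Dwc| <= (K + K) * e -> `|Ez| <= K + K ->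
  `|Ez - Ew| <= (K2 + K2) * (e + e) ->
  0 <= e -> (K + K) + (K + K) + r * ((K2 + K2) + (K2 + K2)) <= C ->
  `|(Dz + zc * Ez + 1) - (Dwc + w * Ew + 1)| <= C * e.
Proof.
move=> h1 h2 h3 h4 h5 e0 hC.
have r0 : 0 <= r by apply: le_trans h2.
have -> : Dz + zc * Ez + 1 - (Dwc + w * Ew + 1) = (Dz - Dwc) + (zc - w) * Ez + w * (Ez - Ew) by ring.
apply: le_trans (ler_normD _ _) _; apply: le_trans (lerD (ler_normD _ _) (lexx _)) _.
rewrite !normrM.
apply: (@le_trans _ _ ((K + K) * e + e * (K + K) + r * ((K2 + K2) * (e + e)))).
  apply: lerD; first apply: lerD => //; apply: ler_pM => //.
apply: le_trans _ (ler_wpM2r e0 hC).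
by rewrite le_eqVlt; apply/orP; left; apply/eqP; ring.
Qed.
End Est.
Lemma gap_lemma (R : realType) (X : topologicalType) (K : set X) (h : X -> R) :
  compact K -> continuous h -> (forall k, K k -> 0 < h k) ->
  exists2 d, 0 < d & forall k, K k -> d <= h k.
Proof.
move=> cK ch hpos.
have cS : compact (h @` K).
  apply: continuous_compact => //; exact: continuous_subspaceT.
have clS : closed (h @` K) by apply: compact_closed => //; exact: Rhausdorff.
have oC : open (~` (h @` K)) by exact: closed_openC.
have : nbhs (0:R) (~` (h @` K)).
  apply: open_nbhs_nbhs; split => //= -[k Kk hk0].
  by move: (hpos k Kk); rewrite hk0 ltxx.
move=> /nbhs_ballP [d d0 Hd]; exists d => // k Kk.
rewrite leNgt; apply/negP => hkd; apply: (Hd (h k)); last by exists k.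
by rewrite /ball /= sub0r normrN gtr0_norm ?hpos.
Qed.

Section CC.
Variable R : realType.

Lemma Re_le_norm (u : R[i]) : ((`|complex.Re u|)%:C : R[i]) <= `|u|.
Proof.
rewrite normc_def lecR -sqrtr_sqr; apply: ler_wsqrtr.
by rewrite lerDl sqr_ge0.
Qed.

Lemma Im_le_norm (u : R[i]) : ((`|complex.Im u|)%:C : R[i]) <= `|u|.
Proof.
rewrite normc_def lecR -sqrtr_sqr; apply: ler_wsqrtr.
by rewrite lerDr sqr_ge0.
Qed.

Lemma lip_cont (f : R[i] -> R) : (forall x y, ((`|f x - f y|)%:C : R[i]) <= `|x - y|) ->
  continuous f.
Proof.
move=> Hf x.
have FF : Filter (nbhs x) by apply: nbhs_filter.
apply/(@cvgrPdist_lt _ _ _ _ FF) => e e0.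
apply/nbhs_ballP; exists e%:C; first by rewrite /= ltcR.
move=> t /= Ht; rewrite -ltcR; exact: le_lt_trans (Hf _ _) Ht.
Qed.

Lemma Re_cont : continuous (fun u : R[i] => complex.Re u).
Proof. apply: lip_cont => x y; rewrite -raddfB; exact: Re_le_norm. Qed.
Lemma Im_cont : continuous (fun u : R[i] => complex.Im u).
Proof. apply: lip_cont => x y; rewrite -raddfB; exact: Im_le_norm. Qed.

Lemma bounded_R (A : set R) : compact A -> exists B, forall x, A x -> `|x| <= B.
Proof.
move=> /compact_bounded [M [_ HM]]; exists (M + 1) => x Ax.
by apply: (HM (M + 1)) => //; rewrite ltrDl.
Qed.

Lemma compact_C_bounded (A : set R[i]) : compact A ->
  exists2 B, 0 <= B & forall x, A x -> `|x| <= B%:C.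
Proof.
move=> cA.
have [B1 H1] : exists B, forall x, ((@complex.Re R) @` A) x -> `|x| <= B.
  by apply: bounded_R; apply: continuous_compact => //; apply: continuous_subspaceT; exact: Re_cont.
have [B2 H2] : exists B, forall x, ((@complex.Im R) @` A) x -> `|x| <= B.
  by apply: bounded_R; apply: continuous_compact => //; apply: continuous_subspaceT; exact: Im_cont.
exists (`|B1| + `|B2|); first by rewrite addr_ge0.
move=> x Ax; rewrite [x]complexE.
apply: le_trans (ler_normD _ _) _; rewrite normrM.
have -> : `|'i%C| = 1 :> R[i] by rewrite normc_def /= expr0n expr1n add0r sqrtr1.
rewrite mul1r rmorphD; apply: lerD.
  rewrite normc_def /= expr0n addr0 sqrtr_sqr lecR.
  apply: le_trans (ler_norm _); apply: H1; by exists x.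
rewrite normc_def /= expr0n addr0 sqrtr_sqr lecR.
apply: le_trans (ler_norm _); apply: H2; by exists x.
Qed.

Lemma lip_contC (f : R[i] -> R[i]) (c : R[i]) : 0 < c ->
  (forall x y, `|f x - f y| <= c * `|x - y|) -> continuous f.
Proof.
move=> c0 Hf x.
have FF : Filter (nbhs x) by apply: nbhs_filter.
apply/(@cvgrPdist_lt R[i] R[i]^o _ _ FF f (f x)) => e e0.
apply/nbhs_ballP; exists (e / c); first by rewrite /= divr_gt0.
move=> t /= Ht; apply: le_lt_trans (Hf _ _) _.
by rewrite -ltr_pdivlMl // mulrC.
Qed.

Lemma phi0_cont (w : R[i]) : continuous (phi0 w).
Proof.
apply: (@lip_contC _ (`|w| + 1)); first by rewrite ltr_wpDl.
move=> x y; rewrite /phi0 -mulrBr normrM; apply: ler_wpM2r => //.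
by rewrite lerDl.
Qed.
Lemma phi1_cont (w : R[i]) : continuous (phi1 w).
Proof.
apply: (@lip_contC _ (`|w| + 1)); first by rewrite ltr_wpDl.
move=> x y; rewrite /phi1 (_ : _ - _ = w * (x - y)); last by ring.
rewrite normrM; apply: ler_wpM2r => //.
by rewrite lerDl.
Qed.

Lemma connected_meet (w : R[i]) (Lam : set R[i]) : is_Lambda w Lam -> connected Lam ->
  exists x y, Lam x /\ Lam y /\ phi0 w x = phi1 w y.
Proof.
move=> [[x0 L0] [cL eL]] conL.
have hC : hausdorff_space R[i] by exact: (@norm_hausdorff R[i] R[i]^o).
have cA : compact (phi0 w @` Lam).
  by apply: continuous_compact => //; apply: continuous_subspaceT; exact: phi0_cont.
have cB : compact (phi1 w @` Lam).
  by apply: continuous_compact => //; apply: continuous_subspaceT; exact: phi1_cont.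
apply: contrapT => Hn.
have disj : forall u, (phi0 w @` Lam) u -> (phi1 w @` Lam) u -> False.
  move=> u [x Lx <-] [y Ly e]; apply: Hn; exists x, y; split => //.
have eA : phi0 w @` Lam = Lam.
  apply: conL.
  - by exists (phi0 w x0), x0.
  - exists (~` (phi1 w @` Lam)); first by apply: closed_openC; exact: compact_closed.
    apply/seteqP; split => u.
      move=> Au; split; first by rewrite eL; left.
      by move=> Bu; apply: (disj u).
    by move=> [+ nB]; rewrite {1}eL => -[//|//].
  - exists (phi0 w @` Lam); first exact: compact_closed.
    apply/seteqP; split => u; last by case.
    by move=> Au; split => //; rewrite eL; left.
apply: (disj (phi1 w x0)); last by exists x0.
by rewrite eA eL; right; exists x0.
Qed.

End CC.
Section Link.
Variable R : realType.

Definition Fr (z : R) (a : bool) := if a then g1 z else f1 z.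
Fixpoint rPhi (z : R) s (p : R * R) := if s is a :: s' then Fr z a (rPhi z s' p) else p.

Lemma rPhi_in z L s p : is_limit_set (f1 z) (g1 z) L -> L p -> L (rPhi z s p).
Proof.
move=> [_ [_ eL]] Lp; elim: s => [|a s IH] //=.
rewrite eL; case: a; rewrite /Fr; [right|left]; by exists (rPhi z s p).
Qed.

Lemma rPhi_diff z p s t : size s = size t ->
  (rPhi z s p).1 - (rPhi z t p).1 = Psi z s - Psi z t /\
  (rPhi z s p).2 - (rPhi z t p).2 = Dd z z s - Dd z z t.
Proof.
elim: s t => [|a s IH] [|b t] //=; first by rewrite !subrr.
move=> [/IH [H1 H2]].
case: a; case: b; rewrite /Fr /f1 /g1 /= /bit; split;
 by [ transitivity (z * ((rPhi z s p).1 - (rPhi z t p).1) + (z - z)); [ring|rewrite H1; ring]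
    | transitivity (z * ((rPhi z s p).1 - (rPhi z t p).1) + (1 - z)); [ring|rewrite H1; ring]
    | transitivity (z * ((rPhi z s p).1 - (rPhi z t p).1) - (1 - z)); [ring|rewrite H1; ring]
    | transitivity (((rPhi z s p).1 - (rPhi z t p).1) + z * ((rPhi z s p).2 - (rPhi z t p).2) + (z - z)); [ring|rewrite H1 H2; ring]
    | transitivity (((rPhi z s p).1 - (rPhi z t p).1) + z * ((rPhi z s p).2 - (rPhi z t p).2) - 1); [ring|rewrite H1 H2; ring]
    | transitivity (((rPhi z s p).1 - (rPhi z t p).1) + z * ((rPhi z s p).2 - (rPhi z t p).2) + 1); [ring|rewrite H1 H2; ring] ].
Qed.

Definition Fc (w : R[i]) (a : bool) := if a then phi1 w else phi0 w.
Fixpoint cPhi (w : R[i]) s x := if s is a :: s' then Fc w a (cPhi w s' x) else x.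

Lemma cPhiE w s x : cPhi w s x = w ^+ size s * x + Psi w s.
Proof.
elim: s => [|a s IH] /=; first by rewrite expr0 mul1r addr0.
rewrite IH exprS; case: a; rewrite /Fc /phi0 /phi1 /bit; ring.
Qed.

Lemma unfold_Lam w Lam : is_Lambda w Lam -> forall n x, Lam x ->
  exists s x', [/\ size s = n, Lam x' & x = cPhi w s x'].
Proof.
move=> [_ [_ eL]]; elim => [|n IH] x Lx; first by exists [::], x.
move: Lx; rewrite {1}eL => -[] [x1 L1 <-]; have [s [x' [Hs L' E]]] := IH x1 L1.
  by exists (false :: s), x'; rewrite /= Hs E.
by exists (true :: s), x'; rewrite /= Hs E.
Qed.
End Link.
Section HH.
Variable R : realType.
Variable z : R.
Definition hh (x : (R*R)*(R*R)) : R := `|z * x.1.1 - (z * (x.2.1 - 1) + 1)| + `|x.1.1 + z * x.1.2 - (x.2.1 - 1 + z * x.2.2)|.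
Lemma hh_cont : continuous hh.
Proof.
move=> x.
have cf : forall (T U : topologicalType), continuous (@fst T U) by move=> T U y; exact: cvg_fst.
have cs : forall (T U : topologicalType), continuous (@snd T U) by move=> T U y; exact: cvg_snd.
have c11 : (fun y : (R*R)*(R*R) => y.1.1) @ x --> x.1.1.
  exact: (continuous_comp (cf _ _ x) (cf _ _ x.1)).
have c12 : (fun y : (R*R)*(R*R) => y.1.2) @ x --> x.1.2.
  exact: (continuous_comp (cf _ _ x) (cs _ _ x.1)).
have c21 : (fun y : (R*R)*(R*R) => y.2.1) @ x --> x.2.1.
  exact: (continuous_comp (cs _ _ x) (cf _ _ x.2)).
have c22 : (fun y : (R*R)*(R*R) => y.2.2) @ x --> x.2.2.
  exact: (continuous_comp (cs _ _ x) (cs _ _ x.2)).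
apply: cvgD; apply: cvg_norm.
  apply: cvgB; first exact: cvgMl_tmp.
  apply: cvgD; last exact: cvg_cst. apply: cvgMl_tmp. apply: cvgB => //. exact: cvg_cst.
apply: cvgB. apply: cvgD => //. exact: cvgMl_tmp.
apply: cvgD; last exact: cvgMl_tmp. apply: cvgB => //. exact: cvg_cst.
Qed.
Lemma cexp (r e : R) : 0 <= r < 1 -> 0 < e -> exists n : nat, r ^+ n < e.
Proof.
move=> /andP[r0 r1] e0.
have := @cvg_expr R r. rewrite ger0_norm // => /(_ r1).
move/cvgrPdist_lt => /(_ e e0) [N _ HN].
exists N. have := HN N (leqnn N). rewrite sub0r normrN ger0_norm //. exact: exprn_ge0.
Qed.
End HH.


Section Norms.
Variable R : realType.
Definition nm (u : R[i]) : R := complex.Re `|u|.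
Lemma normE (u : R[i]) : `|u| = (nm u)%:C.
Proof. by rewrite /nm normc_def. Qed.
Lemma nm_ge0 (u : R[i]) : 0 <= nm u.
Proof. by rewrite -ler0c -normE. Qed.
Lemma norm_realC (x : R) : `|x%:C| = (`|x|)%:C :> R[i].
Proof. by rewrite normc_def /= expr0n addr0 sqrtr_sqr. Qed.
Lemma norm_conjc (u : R[i]) : `|u^*| = `|u|.
Proof. by case: u => a b; rewrite !normc_def /= sqrrN. Qed.
Lemma conj_fix (u : R[i]) : u = u^* -> u = (complex.Re u)%:C.
Proof. by case: u => a b /= [hb]; congr (_ +i* _); lra. Qed.
Lemma normD_sub (a b : R[i]) : `|a| <= `|b| + `|a - b|.
Proof. by have := ler_normD b (a - b); rewrite addrC subrK. Qed.
End Norms.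

Section Arith.
Variable R : realType.
Lemma cst1 (r M K K2 C : R) : 0 < r -> r < 1 -> 0 < M -> 0 < K -> 0 < K2 ->
  C = 2 * M + 6 * K + 4 * K2 + 1 -> (M + M) + r * (K + K) + 1 <= C.
Proof.
move=> r0 r1 M0 K0 K20 ->.
have : r * K <= K by rewrite ler_piMl // ltW.
lra.
Qed.
Lemma cst2 (r M K K2 C : R) : 0 < r -> r < 1 -> 0 < M -> 0 < K -> 0 < K2 ->
  C = 2 * M + 6 * K + 4 * K2 + 1 -> (K + K) + (K + K) + r * ((K2 + K2) + (K2 + K2)) <= C.
Proof.
move=> r0 r1 M0 K0 K20 ->.
have : r * K2 <= K2 by rewrite ler_piMl // ltW.
lra.
Qed.
Lemma eps_pos (d0 B dR : R) : 0 < d0 -> 0 <= B -> 0 < dR ->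
  0 < d0 / (4 * (2 * B + 1) * (1 + 2 / dR)).
Proof.
move=> d00 B0 dR0.
have q0' : 0 < 2 / dR by rewrite divr_gt0.
have q0 : 0 < 1 + 2 / dR by lra.
have b0 : 0 < 4 * (2 * B + 1) by lra.
by rewrite divr_gt0 // mulr_gt0.
Qed.
Lemma final_arith (d0 C ne rho a h X g1 g2 dR r B : R) (n : nat) :
  0 < d0 -> 0 < C -> 0 <= ne -> 0 <= a -> 0 <= h -> 0 < dR -> 0 <= B -> 0 < r -> r < 1 ->
  d0 <= g1 + g2 -> g1 <= a + C * ne -> g2 <= h + C * ne -> dR * h <= X + X -> a <= X ->
  ne <= rho -> rho <= d0 / (4 * C) -> X = r ^+ n.+1 * (B + B) ->
  r ^+ n < d0 / (4 * (2 * B + 1) * (1 + 2 / dR)) -> False.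
Proof.
move=> d00 C0 ne0 a0 h0 dR0 B0 r0 r1 hg hg1 hg2 hH hG Hb rho2 HX Hn.
have hCne : C * ne <= d0 / 4.
  apply: (@le_trans _ _ (C * (d0 / (4 * C)))).
    by apply: ler_wpM2l; [apply: ltW | apply: le_trans Hb rho2].
  rewrite le_eqVlt; apply/orP; left; apply/eqP; field.
  by rewrite gt_eqF.
have hh' : h <= dR^-1 * (X + X) by rewrite ler_pdivlMl.
have rn0 : 0 <= r ^+ n by apply: exprn_ge0; exact: ltW.
have BB : 0 <= B + B by rewrite addr_ge0.
have hX : X <= r ^+ n * (B + B).
  rewrite HX exprS -mulrA; apply: ler_piMl; last exact: ltW.
  by apply: mulr_ge0.
have q0' : 0 < 2 / dR by rewrite divr_gt0.
have q0 : 0 < 1 + 2 / dR by lra.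
have B1 : 0 < 2 * B + 1 by lra.
have BB1 : B + B <= 2 * B + 1 by lra.
have hX2 : X < d0 / (4 * (2 * B + 1) * (1 + 2 / dR)) * (2 * B + 1).
  apply: le_lt_trans hX _.
  apply: (@le_lt_trans _ _ (r ^+ n * (2 * B + 1))); first exact: ler_wpM2l.
  by rewrite ltr_pM2r.
have hXq : X * (1 + 2 / dR) < d0 / 4.
  apply: (@lt_le_trans _ _ (d0 / (4 * (2 * B + 1) * (1 + 2 / dR)) * (2 * B + 1) * (1 + 2 / dR))).
    by rewrite ltr_pM2r.
  rewrite le_eqVlt; apply/orP; left; apply/eqP; field.
  by apply/and3P; split; rewrite gt_eqF //; lra.
have h1 : a + h <= X * (1 + 2 / dR).
  have -> : X * (1 + 2 / dR) = X + dR^-1 * (X + X) by ring.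
  by apply: lerD.
move: d00 hg hg1 hg2 hCne hXq h1; clear; move: (X * _) => Y; move: (C * ne) => Z.
lra.
Qed.
End Arith.

Unset Implicit Arguments.

Theorem lemma10p2p1 (R : realType) (z : R) (L : set (R * R)) :
  -1 < z < 1 ->
  is_limit_set (f1 z) (g1 z) L ->
  f1 z @` L `&` g1 z @` L = set0 ->
  exists U : set R[i],
    open U /\ U (z%:C)%C /\
    @Mset R `&` U `<=` [set w | exists r : R, w = (r%:C)%C].
Proof.
move=> /andP[zl zu] HL Hdisj.
have [az [az0 az1 Haz]] : exists az : R, [/\ 0 <= az, az < 1 & `|z| = az].
  by exists `|z|; split => //; rewrite ltr_norml zl zu.
have [r [r0 r1 azr]] : exists r : R, [/\ 0 < r, r < 1 & az < r].
  by exists ((1 + az) / 2); split; lra.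
have r1' : 1 - r != 0 by rewrite subr_eq0 gt_eqF.
have [M [M0 HM]] : exists M : R, 0 < M /\ r * M + 2 = M.
  by exists (2 / (1 - r)); split; [rewrite divr_gt0 // subr_gt0 | field].
have [K [K0 HK]] : exists K : R, 0 < K /\ r * K + M + 1 = K.
  by exists ((M + 1) / (1 - r)); split; [rewrite divr_gt0 ?subr_gt0 // addr_gt0 | field].
have [K2 [K20 HK2]] : exists K2 : R, 0 < K2 /\ r * K2 + K + K = K2.
  by exists ((K + K) / (1 - r)); split; [rewrite divr_gt0 ?subr_gt0 // addr_gt0 | field].
have [C [C0 HC]] : exists C : R, 0 < C /\ C = 2 * M + 6 * K + 4 * K2 + 1.
  by exists (2 * M + 6 * K + 4 * K2 + 1); split => //; lra.
have [p0 Lp0] : L !=set0 by case: HL.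
have [d0 d0pos Hgap] : exists2 d : R, 0 < d & forall k, (L `*` L) k -> d <= @hh R z k.
  apply: gap_lemma.
  - by case: HL => _ [cL _]; apply: compact_setX.
  - exact: hh_cont.
  move=> [p q] [/= Lp Lq].
  rewrite /hh /= lt_neqAle addr_ge0 // andbT; apply/eqP => /esym /eqP.
  rewrite paddr_eq0 // !normr_eq0 => /andP[/eqP h1 /eqP h2].
  have : (f1 z @` L `&` g1 z @` L) (f1 z p).
    split; first by exists p.
    exists q => //; rewrite /f1 /g1; congr pair; apply/esym/eqP; rewrite -subr_eq0; apply/eqP.
      exact: h1.
    exact: h2.
  by rewrite Hdisj.
have [rho [rho0 rho1 rho2]] : exists rho : R, [/\ 0 < rho, rho <= r - az & rho <= d0 / (4 * C)].
  exists (Num.min (r - az) (d0 / (4 * C))); split.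
  - by rewrite lt_min subr_gt0 azr divr_gt0 ?mulr_gt0.
  - by rewrite ge_min lexx.
  - by rewrite ge_min lexx orbT.
exists (ball (z%:C) rho%:C); split; first exact: ball_open.
split; first by apply: ballxx; rewrite ltcR.
move=> w [[/andP[w0 w1] [Lam [HLam conL]]] Hb].
apply: contrapT => Hnr.
have Hb' : `|w - z%:C| <= rho%:C by rewrite distrC; apply: ltW; exact: Hb.
have hz : `|z%:C| <= r%:C :> R[i] by rewrite norm_realC Haz lecR; apply: ltW.
have hw : `|w| <= r%:C.
  apply: (le_trans (@normD_sub R w (z%:C))).
  rewrite norm_realC Haz; apply: le_trans (lerD (lexx _) Hb') _.
  by rewrite -rmorphD lecR; lra.
have hwc : `|w^*| <= r%:C by rewrite norm_conjc.
have hwcz : `|w^* - z%:C| = `|w - z%:C|.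
  have -> : w^* - z%:C = (w - z%:C)^* by rewrite rmorphB; congr (_ - _); by apply/eqP; rewrite eq_complex /= oppr0 !eqxx.
  by rewrite norm_conjc.
have Mb : forall u, `|u| <= r%:C -> forall s, `|Psi u s| <= M%:C.
  move=> u hu s; apply: (@Psi_bound _ (r%:C)) => //; first by rewrite ler0c ltW.
  apply: (@le_trans _ _ (r%:C * M%:C + (2:R)%:C)).
    apply: lerD => //; apply: le_trans (ler_normB _ _) _.
    rewrite normr1; apply: le_trans (lerD (lexx _) hu) _.
    by rewrite -(rmorph1 (real_complex R)) -rmorphD lecR; lra.
  by rewrite -rmorphM -rmorphD HM.
have Kb : forall u v, `|u| <= r%:C -> `|v| <= r%:C -> forall s, `|Dd u v s| <= K%:C.
  move=> u v hu hv s; apply: (@Dd_bound _ (r%:C) (M%:C)) => //.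
  - by rewrite ler0c ltW.
  - exact: Mb.
  - by rewrite -(rmorph1 (real_complex R)) -rmorphM -!rmorphD HK.
have Lb : forall u v, `|u| <= r%:C -> `|v| <= r%:C -> forall s,
    `|Psi u s - Psi v s| <= K%:C * `|u - v|.
  move=> u v hu hv s; rewrite -DdE normrM mulrC; apply: ler_wpM2r => //.
  exact: Kb.
have K2b : forall u v u' v', `|u| <= r%:C -> `|v| <= r%:C -> `|u'| <= r%:C -> `|v'| <= r%:C ->
    forall s, `|Dd u v s - Dd u' v' s| <= K2%:C * (`|u - u'| + `|v - v'|).
  move=> u v u' v' hu hv hu' hv' s; apply: (@Dd_lip _ (r%:C) (K%:C)) => //.
  - by rewrite ler0c ltW.
  - exact: Kb.
  - exact: Lb.
  - by rewrite -!rmorphM -!rmorphD HK2.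
have [x [y [Lx [Ly Exy]]]] := connected_meet HLam conL.
have [B B0 HB] := compact_C_bounded (HLam.2.1).
have [dR [dR0 HdR]] : exists dR : R, 0 < dR /\ `|w - w^*| = dR%:C.
  exists (@nm R (w - w^*)); split; last exact: normE.
  rewrite lt_neqAle nm_ge0 andbT; apply/eqP => h; apply: Hnr.
  exists (complex.Re w); apply: conj_fix; apply/eqP; rewrite -subr_eq0 -normr_eq0.
  by rewrite normE -h.
have eps0 : 0 < d0 / (4 * (2 * B + 1) * (1 + 2 / dR)).
  by apply: eps_pos.
have [n Hn] : exists n : nat, r ^+ n < d0 / (4 * (2 * B + 1) * (1 + 2 / dR)).
  by apply: cexp => //; rewrite (ltW r0) r1.
have [s [x' [Hs Lx' Ex]]] := unfold_Lam HLam n x Lx.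
have [t [y' [Ht Ly' Ey]]] := unfold_Lam HLam n y Ly.
rewrite cPhiE Hs in Ex; rewrite cPhiE Ht in Ey.
have EG : w * (Psi w s - Psi w t) + w - 1 = - (w ^+ n.+1 * (x' - y')).
  move: Exy; rewrite /phi0 /phi1 Ex Ey => E.
  transitivity (w * (w ^+ n * x' + Psi w s) - (w * (w ^+ n * y' + Psi w t - 1) + 1)
     - w ^+ n.+1 * (x' - y')); first by rewrite exprS; ring.
  by rewrite E subrr sub0r.
set Gw := w * (Psi w s - Psi w t) + w - 1.
set X := r ^+ n.+1 * (B + B).
have hG : `|Gw| <= X%:C.
  rewrite /Gw EG normrN normrM normrX /X rmorphM rmorphXn.
  apply: ler_pM => //.
    by apply: lerXn2r; rewrite ?nnegrE // ler0c ltW.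
  apply: le_trans (ler_normB _ _) _; rewrite rmorphD; apply: lerD; exact: HB.
set Gwc := w^* * (Psi w^* s - Psi w^* t) + w^* - 1.
have hGc : Gwc = Gw^*.
  have Pc : forall s0, Psi w^* s0 = (Psi w s0)^* by move=> s0; rewrite (Psi_morph conjc).
  by rewrite /Gwc /Gw !Pc (rmorphB conjc) (rmorphD conjc) (rmorphM conjc) (rmorphB conjc) (rmorph1 conjc).
set H := (Psi w^* s - Psi w^* t) + w * (Dd w w^* s - Dd w w^* t) + 1.
have EH : (w - w^*) * H = Gw - Gwc.
  transitivity ((w - w^*) * (Psi w^* s - Psi w^* t)
     + w * ((w - w^*) * Dd w w^* s - (w - w^*) * Dd w w^* t) + (w - w^*)).
    by rewrite /H; ring.
  by rewrite !DdE /Gw /Gwc; ring.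
have hH : dR%:C * `|H| <= X%:C + X%:C.
  rewrite -HdR -normrM EH; apply: le_trans (ler_normB _ _) _; apply: lerD => //.
  by rewrite hGc norm_conjc.
have Lp : L (@rPhi R z s p0) by apply: rPhi_in.
have Lq : L (@rPhi R z t p0) by apply: rPhi_in.
have [D1 D2] := @rPhi_diff R z p0 s t (etrans Hs (esym Ht)).
have hg := Hgap (@rPhi R z s p0, @rPhi R z t p0) (conj Lp Lq).
rewrite /hh /= in hg.
have E1 : z * (@rPhi R z s p0).1 - (z * ((@rPhi R z t p0).1 - 1) + 1)
    = z * (Psi z s - Psi z t) + z - 1 by rewrite -D1; ring.
have E2 : (@rPhi R z s p0).1 + z * (@rPhi R z s p0).2 - ((@rPhi R z t p0).1 - 1 + z * (@rPhi R z t p0).2)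
    = (Psi z s - Psi z t) + z * (Dd z z s - Dd z z t) + 1 by rewrite -D1 -D2; ring.
rewrite E1 E2 in hg.
have g1C : (z * (Psi z s - Psi z t) + z - 1)%:C
    = z%:C * (Psi z%:C s - Psi z%:C t) + z%:C - 1 :> R[i].
  by rewrite (rmorphB (real_complex R)) (rmorphD (real_complex R)) (rmorphM (real_complex R))
    (rmorphB (real_complex R)) !(Psi_morph (real_complex R)) (rmorph1 (real_complex R)).
have g2C : ((Psi z s - Psi z t) + z * (Dd z z s - Dd z z t) + 1)%:C
    = (Psi z%:C s - Psi z%:C t) + z%:C * (Dd z%:C z%:C s - Dd z%:C z%:C t) + 1 :> R[i].
  by rewrite !(rmorphD (real_complex R)) !(rmorphN (real_complex R)) (rmorphM (real_complex R))
    !(rmorphD (real_complex R)) !(rmorphN (real_complex R)) !(Psi_morph (real_complex R)) !(Dd_morph (real_complex R)) (rmorph1 (real_complex R)).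
have e0 : 0 <= `|w - z%:C| by [].
have hze : `|z%:C - w| <= `|w - z%:C| by rewrite distrC.
have hzwc : `|z%:C - w^*| <= `|w - z%:C| by rewrite distrC hwcz.
have hrK : r * K <= K by rewrite ler_piMl // ltW.
have hrK2 : r * K2 <= K2 by rewrite ler_piMl // ltW.
have hg1 : (`|z * (Psi z s - Psi z t) + z - 1|)%:C <= `|Gw| + C%:C * `|w - z%:C|.
  rewrite -norm_realC g1C; apply: le_trans (@normD_sub R _ Gw) _; apply: lerD => //.
  rewrite /Gw; apply: (@estG _ _ _ _ _ _ (r%:C) (M%:C) (K%:C)) => //.
  - apply: le_trans (ler_normB _ _) _; apply: lerD; exact: Mb.
  - rewrite (_ : _ - _ = (Psi z%:C s - Psi w s) - (Psi z%:C t - Psi w t)); last by ring.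
    apply: le_trans (ler_normB _ _) _; rewrite mulrDl.
    apply: lerD; (apply: le_trans (Lb _ _ hz hw _) _; apply: ler_wpM2l => //; by rewrite ler0c ltW).
  - rewrite -(rmorph1 (real_complex R)) -!rmorphD -rmorphM -!rmorphD lecR; exact: cst1 HC.
have hg2 : (`|(Psi z s - Psi z t) + z * (Dd z z s - Dd z z t) + 1|)%:C <= `|H| + C%:C * `|w - z%:C|.
  rewrite -norm_realC g2C; apply: le_trans (@normD_sub R _ H) _; apply: lerD => //.
  rewrite /H; apply: (@estH _ _ _ _ _ _ _ _ (r%:C) (K%:C) (K2%:C)) => //.
  - rewrite (_ : _ - _ = (Psi z%:C s - Psi w^* s) - (Psi z%:C t - Psi w^* t)); last by ring.
    apply: le_trans (ler_normB _ _) _; rewrite mulrDl.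
    apply: lerD; (apply: le_trans (Lb _ _ hz hwc _) _; apply: ler_wpM2l => //; by rewrite ler0c ltW).
  - apply: le_trans (ler_normB _ _) _; apply: lerD; exact: Kb.
  - rewrite (_ : _ - _ = (Dd z%:C z%:C s - Dd w w^* s) - (Dd z%:C z%:C t - Dd w w^* t)); last by ring.
    apply: le_trans (ler_normB _ _) _; rewrite mulrDl.
    apply: lerD; (apply: le_trans (K2b _ _ _ _ hz hz hw hwc _) _; apply: ler_wpM2l;
      [by rewrite ler0c ltW | exact: lerD]).
  - rewrite -!rmorphD -rmorphM -!rmorphD lecR; exact: cst2 HC.
rewrite !normE in hg1 hg2 hH hG Hb'.
rewrite -!rmorphM -!rmorphD lecR in hg1.
rewrite -!rmorphM -!rmorphD lecR in hg2.
rewrite -!rmorphM -!rmorphD lecR in hH.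
rewrite lecR in hG; rewrite lecR in Hb'.
have ne0 : 0 <= @nm R (w - z%:C) by apply: nm_ge0.
have a0 : 0 <= @nm R Gw by apply: nm_ge0.
have h0 : 0 <= @nm R H by apply: nm_ge0.
eapply final_arith; [exact d0pos | exact C0 | exact ne0 | exact a0 | exact h0 | exact dR0
  | exact B0 | exact r0 | exact r1 | exact hg | exact hg1 | exact hg2 | exact hH | exact hG
  | exact Hb' | exact rho2 | reflexivity | exact Hn].
Qed.
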